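(* For every mediator $m$, the Price by Removal Mechanism is individually rational for $m$, and truthfulness is a (weakly) dominant strategy for $m$.
   Context: Model: finite sets of users $P$ (costs $c(p)\ge0$), mediators $M$ (the sets $P(m)$ partition $P$), advertisers $A$ (public capacity $u(a)$, a positive integer, and private value $v(a)\ge0$); each advertiser $a$ has $u(a)$ slots of value $v(a)$; $B$ is the set of all slots. A mediator's utility is the total payment he receives minus the total cost of his users that are assigned. Each advertiser reports a value; each mediator reports any subset of his users with arbitrary costs (and an order on them); truthful means reporting the true users and costs. IR for $m$: $m$'s utility is non-negative when truthful. $\gamma\ge1$ satisfies $u(a)\le\gamma$ and $|P(m)|\le\gamma$. Costs/values are compared with a fixed tie-breaking rule (using a report-independent order on players) making them all distinct. Canonical assignment $S_c(P',B')$: order slots of $B'$ by decreasing value $b_1,\dots$ and users of $P'$ by increasing cost $p_1,\dots$; include $(p_i,b_i)$ iff $v(b_i)>c(p_i)$; the user at location $i$ is $p_i$. Price by Removal Mechanism (on reports): (1) for each mediator $m$, if $|S_c(P\setminus P(m),B)|>4\gamma$, $p_m$ is the user at location $|S_c(P\setminus P(m),B)|-4\gamma$ of $S_c(P\setminus P(m),B)$ and $c_m=c(p_m)$, else $c_m=-\infty$; (2) $\hat P(m)$ = users of $m$ with cost less than $c_m$; (3) VCG auction with items $\bigcup_m\hat P(m)$ and bidders the advertisers (value $v(a)$ for each of up to $u(a)$ items) plus a dummy advertiser of value $\max_m c_m$ and capacity $\sum_m|\hat P(m)|$; (4) charge advertisers their VCG payments; (5) for each assigned user $p$, pay $c_m$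 to the mediator $m$ of $p$. *)

(* Defs.v *)
From HB Require Import structures.
From mathcomp Require Import all_boot all_order all_algebra.
Import Order.TTheory GRing.Theory Num.Theory.
Set Implicit Arguments. Unset Strict Implicit. Unset Printing Implicit Defensive.
Local Open Scope ring_scope.

Section PriceByRemoval.

Variables (R : realFieldType) (U Med Adv : finType).
(* U = users, Med = mediators, Adv = advertisers.
   owner p = the mediator m with p \in P(m)  (so the P(m) partition U). *)
Variable owner : U -> Med.
Variable cap : Adv -> nat.
(* report-independent order on the players (mediators and advertisers),
   used for tie-breaking *)
Variable rank : Med + Adv -> nat.
Variable gamma : nat.

(* A compared quantity is a key (x, r, o): numerical value x, rank r of the
   player it belongs to, and o the position of the user in his mediator's
   reported order (0 for advertiser slots). *)
Definition key := (R * nat * nat)%type.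

Definition key_lt (x y : key) : bool :=
  (x.1.1 < y.1.1) ||
  ((x.1.1 == y.1.1) && ((x.1.2 < y.1.2)%N || ((x.1.2 == y.1.2) && (x.2 < y.2)%N))).

Definition key_le (x y : key) : bool := (x == y) || key_lt x y.

(* A (global) report of the users' side: the reported set of users (mediator
   m's reported users are those of rep_users owned by m), reported costs, and
   the reported order (a rank within each mediator's users). *)
Record report := Report {
  rep_users : {set U};
  rep_cost  : U -> R;
  rep_ord   : U -> nat }.

Definition combine (m : Med) (mine theirs : report) : report :=
  Report [set p | if owner p == m then p \in rep_users mine
                  else p \in rep_users theirs]
         (fun p => if owner p == m then rep_cost mine p else rep_cost theirs p)
         (fun p => if owner p == m then rep_ord mine p else rep_ord theirs p).

Definition valid_orders (r : report) : Prop :=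
  forall m' : Med, {in [pred p | owner p == m'] &, injective (rep_ord r)}.

Definition truthful (c : U -> R) (m : Med) (r : report) : Prop :=
  (forall p, owner p = m -> p \in rep_users r) /\
  (forall p, owner p = m -> rep_cost r p = c p).

Definition ukey (r : report) (p : U) : key :=
  (rep_cost r p, rank (inl (owner p)), rep_ord r p).

Definition slots (vr : Adv -> R) : seq key :=
  flatten [seq nseq (cap a) (vr a, rank (inr a), 0%N) | a <- enum Adv].

Definition slots_sorted (vr : Adv -> R) : seq key :=
  sort (fun x y => key_le y x) (slots vr).

Definition users_sorted (r : report) (P' : {set U}) : seq U :=
  sort (fun p q => key_le (ukey r p) (ukey r q)) (enum P').

Definition Sc_size (r : report) (vr : Adv -> R) (P' : {set U}) : nat :=
  count (fun pb : U * key => key_lt (ukey r pb.1) pb.2)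
        (zip (users_sorted r P') (slots_sorted vr)).

(* the user at location i (1-based) of S_c(P', B) *)
Definition Sc_user (r : report) (P' : {set U}) (i : nat) : option U :=
  onth (users_sorted r P') i.-1.

Definition others (r : report) (m : Med) : {set U} :=
  [set p in rep_users r | owner p != m].

(* step (1): threshold c_m ; None stands for -infinity *)
Definition cthr (r : report) (vr : Adv -> R) (m : Med) : option key :=
  let k := Sc_size r vr (others r m) in
  if (4 * gamma < k)%N then omap (ukey r) (Sc_user r (others r m) (k - 4 * gamma))
  else None.

Definition opt_lt (x : key) (o : option key) : bool :=
  if o is Some y then key_lt x y else false.

Definition items (r : report) (vr : Adv -> R) : {set U} :=
  [set p in rep_users r | opt_lt (ukey r p) (cthr r vr (owner p))].

Definition omax_key (o1 o2 : option key) : option key :=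
  match o1, o2 with
  | None, o | o, None => o
  | Some x, Some y => if key_lt x y then Some y else Some x
  end.

Definition dummy (r : report) (vr : Adv -> R) : option key :=
  foldr omax_key None [seq cthr r vr m | m <- enum Med].

Definition beats_dummy (d : option key) (b : key) : bool :=
  if d is Some y then key_lt y b else true.

(* In the VCG auction all items are identical and every bidder values each of
   at most cap items equally; with distinct (tie-broken) values the efficient
   allocation gives items to the highest slots, the dummy (whose capacity is
   the number of items) taking the rest. *)
Definition nwin (r : report) (vr : Adv -> R) : nat :=
  minn #|items r vr| (count (beats_dummy (dummy r vr)) (slots vr)).

(* Asg is a possible set of assigned users (i.e. users given to real
   advertisers) in the VCG outcome: items are interchangeable, so any
   set of items of the right size *)
Definition vcg_assigned (r : report) (vr : Adv -> R) (Asg : {set U}) : bool :=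
  (Asg \subset items r vr) && (#|Asg| == nwin r vr).

Definition price (r : report) (vr : Adv -> R) (m : Med) : R :=
  if cthr r vr m is Some k then k.1.1 else 0.

Definition med_utility (c : U -> R) (r : report) (vr : Adv -> R)
    (Asg : {set U}) (m : Med) : R :=
  \sum_(p in Asg | owner p == m) (price r vr m - c p).

End PriceByRemoval.

(* Main.v *)
Require Import Defs.
From mathcomp Require Import all_boot all_order all_algebra zify.
From Stdlib Require Import FunctionalExtensionality.
Import Order.TTheory GRing.Theory Num.Theory.
Set Implicit Arguments. Unset Strict Implicit.

Lemma nlt_trans (b c b' c' b'' c'' : nat) :
  (b < b')%N || (b == b') && (c < c')%N ->
  (b' < b'')%N || (b' == b'') && (c' < c'')%N ->
  (b < b'')%N || (b == b'') && (c < c'')%N.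
Proof.
move=> /orP[h1|/andP[/eqP e1 h1]] /orP[h2|/andP[/eqP e2 h2]]; subst.
- by rewrite (ltn_trans h1 h2).
- by rewrite h1.
- by rewrite h2.
- by rewrite eqxx (ltn_trans h1 h2) orbT.
Qed.
Arguments nlt_trans {b c b' c' b'' c''}.

Section Keys.
Variable R : realFieldType.
Local Open Scope ring_scope.
Implicit Types x y z : key R.

Lemma key_lt_irr x : key_lt x x = false.
Proof. by case: x => [[a b] c]; rewrite /key_lt /= ltxx eqxx !ltnn /= andbF. Qed.

Lemma key_lt_trans y x z : key_lt x y -> key_lt y z -> key_lt x z.
Proof.
case: x => [[a b] c]; case: y => [[a' b'] c']; case: z => [[a'' b''] c''].
rewrite /key_lt /=.
move=> /orP[h1|/andP[/eqP e1 h1]] /orP[h2|/andP[/eqP e2 h2]]; subst.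
- by rewrite (lt_trans h1 h2).
- by rewrite h1.
- by rewrite h2.
- by rewrite eqxx (nlt_trans h1 h2) orbT.
Qed.

Lemma key_lt_total x y : [|| key_lt x y, x == y | key_lt y x].
Proof.
case: x => [[a b] c]; case: y => [[a' b'] c'].
rewrite /key_lt /=.
case: (ltgtP a a') => [h1|h1|e]; rewrite ?orbT //; subst.
rewrite ?eqxx /=.
case: (ltngtP b b') => [h1|h1|e]; rewrite ?orbT //; subst.
rewrite ?eqxx /=.
case: (ltngtP c c') => [h1|h1|e]; rewrite ?orbT //; subst.
by rewrite eqxx orbT.
Qed.

Lemma key_le_refl x : key_le x x. Proof. by rewrite /key_le eqxx. Qed.

Lemma key_le_total x y : key_le x y || key_le y x.
Proof.
rewrite /key_le; case/or3P: (key_lt_total x y) => [->|/eqP->|->];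
  rewrite ?orbT ?eqxx //.
Qed.

Lemma key_le_lt_trans y x z : key_le x y -> key_lt y z -> key_lt x z.
Proof. by case/orP => [/eqP->//|]; apply: key_lt_trans. Qed.

Lemma key_lt_le_trans y x z : key_lt x y -> key_le y z -> key_lt x z.
Proof. by move=> h; case/orP => [/eqP<-//|]; apply: key_lt_trans. Qed.

Lemma key_le_trans y x z : key_le x y -> key_le y z -> key_le x z.
Proof.
move=> h; case/orP => [/eqP<-//|h2]; apply/orP; right.
exact: key_le_lt_trans h h2.
Qed.

Lemma key_le_ltF x y : key_le x y -> key_lt y x = false.
Proof.
move=> h; apply/negP => h2; have := key_le_lt_trans h h2.
by rewrite key_lt_irr.
Qed.

Lemma key_ltNle x y : ~~ key_lt x y -> key_le y x.
Proof.
move=> h; rewrite /key_le; case/or3P: (key_lt_total x y) => [h'|/eqP->|->];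
  rewrite ?orbT ?eqxx //.
by rewrite h' in h.
Qed.

Lemma key_lt_fst x y : key_lt x y -> x.1.1 <= y.1.1.
Proof. by rewrite /key_lt => /orP[/ltW//|/andP[/eqP-> _]]. Qed.

Lemma key_fst_lt x y : x.1.1 < y.1.1 -> key_lt x y.
Proof. by rewrite /key_lt => ->. Qed.
End Keys.

Lemma eq_in_sort (T : eqType) (leT leT' : rel T) (s : seq T) :
  {in s &, leT =2 leT'} -> sort leT s = sort leT' s.
Proof.
move=> H.
pose sT := {x : T | x \in s}.
have Es : s = map val (pmap (insub : T -> option sT) s).
  rewrite (pmap_filter (insubK _)) (eq_filter (isSome_insub _)).
  by apply/esym/all_filterP/allP.
rewrite Es !sort_map; congr (map _ (sort _ _)).
apply: functional_extensionality => u; apply: functional_extensionality => v.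
by rewrite /relpre /=; apply: H; [case: u | case: v].
Qed.

Lemma mem_zip1 (S T : eqType) (s : seq S) (t : seq T) x y :
  (x, y) \in zip s t -> x \in s.
Proof.
elim: s t => [|a s IH] [|b t] //=; rewrite !inE => /orP[/eqP[-> _]|/IH ->].
  by rewrite eqxx.
by rewrite orbT.
Qed.

Lemma count_prefix (T : Type) (a : pred T) x0 s k :
  (forall i j, i <= j -> j < size s -> a (nth x0 s j) -> a (nth x0 s i)) ->
  count a s = k -> forall j, j < k -> a (nth x0 s j).
Proof.
move=> H Ek j jk; apply/negPn/negP => nj.
have hd : count a (drop j s) = 0.
  apply/eqP; rewrite -leqn0 leqNgt -has_count; apply/negP.
  move=> /(has_nthP x0) [l]; rewrite size_drop nth_drop => ls al.
  have ls' : j + l < size s by lia.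
  by have := H j (j + l) (leq_addr _ _) ls' al; rewrite (negbTE nj).
have : count a s <= j.
  rewrite -(cat_take_drop j s) count_cat hd addn0.
  apply: leq_trans (count_size _ _) _; rewrite size_take_min; exact: geq_minl.
lia.
Qed.

Section Omax.
Variable R : realFieldType.
Lemma foldr_omax (l : seq (option (key R))) :
  match foldr (@omax_key R) None l with
  | None => forall o, o \in l -> o = None
  | Some y => Some y \in l /\ forall z, Some z \in l -> key_le z y
  end.
Proof.
elim: l => [|o l IH] //=.
case E: (foldr (@omax_key R) None l) IH => [y|] IH; case: o => [x|] /=.
- case: ifP => hxy.
  + split; first by rewrite inE (proj1 IH) orbT.
    move=> z; rewrite inE => /orP[/eqP[->]|/(proj2 IH)//].
    by rewrite /key_le hxy orbT.
  + split; first by rewrite inE eqxx.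
    move=> z; rewrite inE => /orP[/eqP[->]|/(proj2 IH) hz].
      exact: key_le_refl.
    exact: key_le_trans hz (key_ltNle (negbT hxy)).
- split; first by rewrite inE (proj1 IH) orbT.
  by move=> z; rewrite inE => /orP[/eqP//|/(proj2 IH)].
- split; first by rewrite inE eqxx.
  move=> z; rewrite inE => /orP[/eqP[->]|/IH//]; first exact: key_le_refl.
- by move=> o; rewrite inE => /orP[/eqP->|/IH].
Qed.
End Omax.

Section Main.
Variables (R : realFieldType) (U Med Adv : finType).
Variables (owner : U -> Med) (cap : Adv -> nat) (rank : Med + Adv -> nat) (gamma : nat).

Notation cthr := (cthr owner cap rank gamma).
Notation ukey := (ukey owner rank).

Lemma cthr_indep m (t d theirs : report R U) vr :
  cthr (combine owner m t theirs) vr m = cthr (combine owner m d theirs) vr m.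
Proof.
set r1 := combine owner m t theirs; set r2 := combine owner m d theirs.
have Eo : others owner r1 m = others owner r2 m.
  apply/setP => p; rewrite !inE /=.
  by case: (owner p == m); rewrite ?andbF.
have Ek : {in others owner r2 m, ukey r1 =1 ukey r2}.
  move=> p; rewrite inE => /andP[_ hp].
  by rewrite /Defs.ukey /= (negbTE hp).
have Es : users_sorted owner rank r1 (others owner r1 m)
        = users_sorted owner rank r2 (others owner r2 m).
  rewrite Eo /users_sorted; apply: eq_in_sort => p q.
  by rewrite !mem_enum => hp hq; rewrite !Ek.
have Ez : Sc_size owner cap rank r1 vr (others owner r1 m)
        = Sc_size owner cap rank r2 vr (others owner r2 m).
  rewrite /Sc_size Es; apply: eq_in_count => [[p b]] /mem_zip1.
  rewrite /users_sorted mem_sort mem_enum => hp /=.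
  by rewrite Ek.
rewrite /Defs.cthr Ez; case: ifP => // _.
rewrite /Sc_user Es.
case E: (onth _ _) => [p|] //=.
congr Some; apply: Ek.
have : p \in users_sorted owner rank r2 (others owner r2 m).
  by apply/onthP; eexists; exact: E.
by rewrite mem_sort mem_enum.
Qed.

Lemma items_bound (r : report R U) vr :
  (forall m, #|[set p | owner p == m]| <= gamma) ->
  #|items owner cap rank gamma r vr|
    <= count (beats_dummy (dummy owner cap rank gamma r vr)) (slots cap rank vr).
Proof.
move=> Hg.
have Hd := foldr_omax [seq cthr r vr m | m <- enum Med].
rewrite /dummy; move: Hd.
case: (foldr _ None _) => [y|] Hd; last first.
  suff -> : items owner cap rank gamma r vr = set0 by rewrite cards0.
  apply/setP => p; rewrite !inE.
  rewrite (Hd (cthr r vr (owner p))) ?andbF //.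
  by apply: map_f; rewrite mem_enum.
case: Hd => /mapP [m' _ Em'] Hmax.
set L := users_sorted owner rank r (others owner r m').
set S := slots_sorted cap rank vr.
set k := Sc_size owner cap rank r vr (others owner r m').
move: Em'; rewrite /Defs.cthr -/k.
case: ifP => // hk.
rewrite /Sc_user -/L.
case Ep: (onth L _) => [p|] //= [Ey].
set i := (k - 4 * gamma).-1 in Ep.
have hik : i < k by rewrite /i; lia.
have pL : nth p L i = p by apply: onth_nth.
have sL : sorted (fun p q => key_le (ukey r p) (ukey r q)) L.
  by apply: sort_sorted => a b; exact: key_le_total.
have sS : sorted (fun x y => key_le y x) S.
  by apply: sort_sorted => a b; exact: key_le_total.
have leL : forall a b, a <= b -> b < size L ->
    key_le (ukey r (nth p L a)) (ukey r (nth p L b)).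
  move=> a b ab bL.
  apply: (sorted_leq_nth (leT := fun p q => key_le (ukey r p) (ukey r q))) => //.
  - by move=> u v w; apply: key_le_trans.
  - by move=> u; apply: key_le_refl.
  - by rewrite inE; lia.
have leS : forall a b, a <= b -> b < size S -> key_le (nth y S b) (nth y S a).
  move=> a b ab bS.
  apply: (sorted_leq_nth (leT := fun x y => key_le y x)) => //.
  - by move=> u v w h1 h2; apply: key_le_trans h2 h1.
  - by move=> u; apply: key_le_refl.
  - by rewrite inE; lia.
have kZ : k <= size (zip L S) by apply: count_size.
rewrite size_zip in kZ.
have kL : k <= size L by lia.
have kS : k <= size S by lia.
have pre : forall j, j < k -> key_lt (ukey r (nth p L j)) (nth y S j).
  move=> j jk.
  pose P := fun pb : U * key R => key_lt (ukey r pb.1) pb.2.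
  have Ek : count P (zip L S) = k by [].
  have Hpre : forall a b, a <= b -> b < size (zip L S) ->
      P (nth (p, y) (zip L S) b) -> P (nth (p, y) (zip L S) a).
    move=> a b ab; rewrite size_zip => bZ.
    rewrite /P !nth_zip_cond size_zip !ifT /=; try lia.
    move=> h; apply: key_le_lt_trans (leL a b ab _) _; first lia.
    apply: key_lt_le_trans h _; apply: leS => //; lia.
  have := count_prefix Hpre Ek jk.
  by rewrite /P nth_zip_cond size_zip ifT /=; [|lia].
have cS : k <= count (beats_dummy (Some y)) (slots cap rank vr).
  have -> : count (beats_dummy (Some y)) (slots cap rank vr)
          = count (beats_dummy (Some y)) S by rewrite /S /slots_sorted count_sort.
  rewrite -(cat_take_drop k S) count_cat.
  apply: leq_trans (leq_addr _ _).
  suff hall : all (beats_dummy (Some y)) (take k S).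
    by move: hall; rewrite all_count => /eqP ->; rewrite size_takel.
  apply/(all_nthP y) => j; rewrite size_takel // => jk.
  rewrite nth_take //=.
  have hy : key_le y (ukey r (nth p L k.-1)).
    have := leL i k.-1 _ _; rewrite pL -Ey; apply; lia.
  apply: key_le_lt_trans hy _.
  apply: key_lt_le_trans (pre k.-1 _) _; first lia.
  by apply: leS; lia.
apply: leq_trans cS.
have sub : items owner cap rank gamma r vr \subset
           [set q in take i L] :|: [set q | owner q == m'].
  apply/subsetP => q; rewrite !inE => /andP[qu hq].
  case: eqP => [|/eqP hm]; rewrite ?orbT // ?orbF.
  have qlt : key_lt (ukey r q) y.
    move: hq; rewrite /opt_lt; case Eq: (cthr r vr (owner q)) => [z|] // hz.
    apply: key_lt_le_trans hz (Hmax z _).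
    by rewrite -Eq; apply: map_f; rewrite mem_enum.
  have qL : q \in L by rewrite /L /users_sorted mem_sort mem_enum !inE qu hm.
  rewrite in_take //; rewrite ltnNge; apply/negP => iq.
  have := leL i (index q L) iq; rewrite index_mem nth_index // pL -Ey => h.
  by rewrite (key_le_ltF (h qL)) in qlt.
apply: leq_trans (subset_leq_card sub) _.
apply: leq_trans (leq_card_setU _ _) _.
have h1 : #|[set q in take i L]| <= i.
  rewrite cardsE; apply: leq_trans (card_size _) _.
  by rewrite size_take_min; exact: geq_minl.
have h2 := Hg m'.
lia.
Qed.
End Main.

Local Open Scope ring_scope.

Theorem lemma11 (R : realFieldType) (U Med Adv : finType)
    (owner : U -> Med) (c : U -> R) (cap : Adv -> nat)
    (rank : Med + Adv -> nat) (gamma : nat) :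
  (forall p, 0 <= c p) ->
  (forall a, 0 < cap a)%N ->
  (1 <= gamma)%N ->
  (forall a, cap a <= gamma)%N ->
  (forall m, #|[set p | owner p == m]| <= gamma)%N ->
  injective rank ->
  forall (m : Med) (vr : Adv -> R) (theirs t d : report R U)
         (At Ad : {set U}),
    truthful owner c m t ->
    valid_orders owner (combine owner m t theirs) ->
    valid_orders owner (combine owner m d theirs) ->
    vcg_assigned owner cap rank gamma (combine owner m t theirs) vr At ->
    vcg_assigned owner cap rank gamma (combine owner m d theirs) vr Ad ->
    0 <= med_utility owner cap rank gamma c (combine owner m t theirs) vr At m /\
    med_utility owner cap rank gamma c (combine owner m d theirs) vr Ad m
      <= med_utility owner cap rank gamma c (combine owner m t theirs) vr At m.
Proof.
move=> c0 cap0 g1 capg Hg rinj m vr theirs t d At Ad [tin tc] _ _ vAt vAd.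
set r := combine owner m t theirs; set rd := combine owner m d theirs.
have EAt : At = items owner cap rank gamma r vr.
  move: vAt; rewrite /vcg_assigned => /andP[sub /eqP card]; apply/eqP; rewrite eqEcard sub card /nwin.
  by rewrite (minn_idPl (@items_bound _ _ _ _ owner cap rank gamma r vr Hg)) leqnn.
have Ec : cthr owner cap rank gamma r vr m = cthr owner cap rank gamma rd vr m.
  exact: cthr_indep.
have nn : forall p, p \in At -> owner p == m ->
    0 <= price owner cap rank gamma r vr m - c p.
  move=> p; rewrite EAt inE => /andP[_ hq] om.
  move: hq; rewrite /opt_lt (eqP om) /price.
  case: (cthr owner cap rank gamma r vr m) => [z|] // hz.
  rewrite subr_ge0; have := key_lt_fst hz.
  by rewrite /ukey /= om tc //; apply/eqP.
split.
  rewrite /med_utility; apply: sumr_ge0 => p /andP[pA om]; exact: nn.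
rewrite /med_utility big_mkcond [X in _ <= X]big_mkcond /=; apply: ler_sum => p _.
have rhs0 : 0 <= (if (p \in At) && (owner p == m)
                  then price owner cap rank gamma r vr m - c p else 0).
  by case: ifP => // /andP[]; exact: nn.
case: ifP => [/andP[pAd om]|_]; last exact: rhs0.
move: vAd; rewrite /vcg_assigned => /andP[/subsetP subd _].
have := subd p pAd; rewrite inE => /andP[_].
rewrite /opt_lt (eqP om) -Ec.
case Ez: (cthr owner cap rank gamma r vr m) => [z|] // _.
have Hp : price owner cap rank gamma rd vr m = z.1.1 by rewrite /price -Ec Ez.
have Hp' : price owner cap rank gamma r vr m = z.1.1 by rewrite /price Ez.
rewrite Hp.
have [lt|ge] := ltP (c p) z.1.1.
  have pAt : p \in At.
    rewrite EAt inE; apply/andP; split.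
      by rewrite /r /= inE om; apply: tin; apply/eqP.
    rewrite /opt_lt (eqP om) Ez; apply: key_fst_lt.
    by rewrite /ukey /= om tc //; apply/eqP.
  by rewrite pAt ?eqxx ?om Hp'.
apply: le_trans (_ : _ <= 0) _; first by rewrite subr_le0.
by move: rhs0; rewrite (eqP om).
Qed.
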